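(* For every Hilbert space $H$ with $\dim H\ge2$, there exist an infinite semigroup $G$ with unit which is not left-cancellative, a contractive representation $\mathcal S=(S(g))_{g\in G}$ of $G$ on $H$, a representation $\mathcal T=(T(g))_{g\in G}$ of $G$ on $H$, and operators $A,B\in\mathcal L(H)$ such that $$\sum_{g\in G}\|T(g)-AS(g)B\|^2<\infty,$$ but $\mathcal T$ is not similar to a contractive representation of $G$ (i.e. there is no invertible $R\in\mathcal L(H)$ with $\|R^{-1}T(g)R\|\le1$ for all $g\in G$).
   Context: A semigroup $(G,\cdot)$ is left-cancellative if $f\cdot a=f\cdot b$ implies $a=b$ for all $f,a,b\in G$. A representation of a unital semigroup $G$ on $H$ is a map $g\mapsto T(g)\in\mathcal L(H)$ with $T(gh)=T(g)T(h)$ and $T(e)=I$; it is contractive if all $T(g)$ are contractions. *)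

(* Defs.v *)
From mathcomp Require Import all_boot all_algebra.
From mathcomp Require Import complex.
From mathcomp Require Import all_classical all_reals ereal esum.
Import GRing.Theory Num.Theory.
Local Open Scope ring_scope.
Local Open Scope classical_set_scope.

Set Implicit Arguments.
Unset Strict Implicit.
Unset Printing Implicit Defensive.

Section Hilbert.
Variable R : realType.
Variable V : lmodType R[i].
Variable ip : V -> V -> R[i].  (* inner product, linear in the first slot *)

Definition hnorm (x : V) : R := Num.sqrt (complex.Re (ip x x)).

Definition is_hilbert : Prop :=
  [/\ (forall (a : R[i]) (x y z : V), ip (a *: x + y) z = a * ip x z + ip y z),
      (forall x y : V, ip y x = (ip x y)^*),
      (forall x : V, 0 <= ip x x),
      (forall x : V, ip x x = 0 -> x = 0) &
      (forall u : nat -> V,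
         (forall eps : R, 0 < eps -> exists N : nat, forall m n : nat,
             (N <= m)%N -> (N <= n)%N -> hnorm (u m - u n) < eps) ->
         exists l : V, forall eps : R, 0 < eps -> exists N : nat,
             forall n : nat, (N <= n)%N -> hnorm (u n - l) < eps)].

Definition dim_ge2 : Prop :=
  exists x y : V, forall a b : R[i], a *: x + b *: y = 0 -> a = 0 /\ b = 0.

Definition bounded_op (f : V -> V) : Prop :=
  (forall (a : R[i]) (x y : V), f (a *: x + y) = a *: f x + f y) /\
  (exists M : R, forall x : V, hnorm (f x) <= M * hnorm x).

Definition opnorm (f : V -> V) : R :=
  sup [set r : R | exists x : V, hnorm x <= 1 /\ r = hnorm (f x)].

Definition invertible_op (R0 Ri : V -> V) : Prop :=
  [/\ bounded_op R0, bounded_op Ri,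
      (forall x, R0 (Ri x) = x) & (forall x, Ri (R0 x) = x)].

Definition representation (G : Type) (op : G -> G -> G) (e : G)
  (T : G -> V -> V) : Prop :=
  [/\ forall g, bounded_op (T g),
      forall g h x, T (op g h) x = T g (T h x) &
      forall x, T e x = x].

Definition contractive (G : Type) (T : G -> V -> V) : Prop :=
  forall g, opnorm (T g) <= 1.

Definition similar_to_contractive (G : Type) (T : G -> V -> V) : Prop :=
  exists R0 Ri : V -> V, invertible_op R0 Ri /\
    forall g, opnorm (fun x => Ri (T g (R0 x))) <= 1.

End Hilbert.

Definition unital_semigroup (G : Type) (op : G -> G -> G) (e : G) : Prop :=
  [/\ forall a b c, op a (op b c) = op (op a b) c,
      forall a, op e a = a & forall a, op a e = a].

Definition left_cancellative (G : Type) (op : G -> G -> G) : Prop :=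
  forall f a b, op f a = op f b -> a = b.

(* Main.v *)
Require Import Defs.
From mathcomp Require Import all_boot all_algebra.
From mathcomp Require Import complex.
From mathcomp Require Import all_classical all_reals ereal esum.
From mathcomp Require Import all_order ring lra.
Import Order.TTheory GRing.Theory Num.Theory.
Local Open Scope ring_scope.
Local Open Scope classical_set_scope.

Section Aux.
Context {R : realType} {V : lmodType R[i]} {ip : V -> V -> R[i]}.
Hypothesis Hh : is_hilbert ip.

Lemma ipDZl a x y z : ip (a *: x + y) z = a * ip x z + ip y z.
Proof. by case: Hh => h _ _ _ _; apply: h. Qed.
Lemma ipC x y : ip y x = (ip x y)^*.
Proof. by case: Hh => _ h _ _ _; apply: h. Qed.
Lemma ip_ge0 x : 0 <= ip x x.
Proof. by case: Hh => _ _ h _ _; apply: h. Qed.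
Lemma ip_eq0 x : ip x x = 0 -> x = 0.
Proof. by case: Hh => _ _ _ h _; apply: h. Qed.

Lemma ip0l z : ip 0 z = 0.
Proof.
have h := ipDZl 1 0 0 z; rewrite scale1r addr0 mul1r in h.
by apply: (addrI (ip 0 z)); rewrite -h addr0.
Qed.
Lemma ipDl x y z : ip (x + y) z = ip x z + ip y z.
Proof. by rewrite -[x]scale1r ipDZl mul1r scale1r. Qed.
Lemma ipZl a x z : ip (a *: x) z = a * ip x z.
Proof. by rewrite -[a *: x]addr0 ipDZl ip0l addr0. Qed.
Lemma ipNl x z : ip (- x) z = - ip x z.
Proof. by rewrite -scaleN1r ipZl mulN1r. Qed.
Lemma ipBl x y z : ip (x - y) z = ip x z - ip y z.
Proof. by rewrite ipDl ipNl. Qed.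
Lemma ipDr x y z : ip z (x + y) = ip z x + ip z y.
Proof. by rewrite ipC ipDl rmorphD /= -!ipC. Qed.
Lemma ipZr a x z : ip z (a *: x) = a^* * ip z x.
Proof. by rewrite ipC ipZl rmorphM /= -!ipC. Qed.
Lemma ip0r z : ip z 0 = 0.
Proof. by rewrite ipC ip0l rmorph0. Qed.

Lemma ReK {z : R[i]} : 0 <= z -> ((complex.Re z)%:C)%C = z.
Proof. by move=> /ger0_real /RRe_real. Qed.
Lemma Re_ge0 {z : R[i]} : 0 <= z -> 0 <= complex.Re z.
Proof. by move=> h; rewrite -ler0c ReK. Qed.
Lemma Re_le (z y : R[i]) : z <= y -> complex.Re z <= complex.Re y.
Proof. by rewrite lecE => /andP[]. Qed.

Lemma hnorm_ge0 x : 0 <= hnorm ip x.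
Proof. exact: sqrtr_ge0. Qed.

Lemma hnorm_le x y : (hnorm ip x <= hnorm ip y) = (ip x x <= ip y y).
Proof.
rewrite /hnorm ler_sqrt; last exact/Re_ge0/ip_ge0.
rewrite -[in RHS](ReK (ip_ge0 x)) -[in RHS](ReK (ip_ge0 y)).
by rewrite lecR.
Qed.

Lemma hnorm0 : hnorm ip 0 = 0.
Proof. by rewrite /hnorm ip0l /= sqrtr0. Qed.

Lemma hnorm_eq0 x : hnorm ip x = 0 -> x = 0.
Proof.
move=> /eqP; rewrite sqrtr_eq0 => h; apply: ip_eq0.
rewrite -(ReK (ip_ge0 x)); have h0 := Re_ge0 (ip_ge0 x).
have -> : complex.Re (ip x x) = 0 by apply/eqP; rewrite eq_le h h0.
by [].
Qed.

Lemma conj_realC (s : R) : ((s%:C)%C)^* = (s%:C)%C.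
Proof. by apply/eqP; rewrite -CrealE complex_real. Qed.

Lemma hnormZ (r : R) x : 0 <= r -> hnorm ip ((r%:C)%C *: x) = r * hnorm ip x.
Proof.
move=> r0; rewrite /hnorm ipZl ipZr conj_realC mulrA -(ReK (ip_ge0 x)).
rewrite -rmorphM /= mulr0 subr0 sqrtrM ?mulr_ge0 // -expr2 sqrtr_sqr ger0_norm //.
Qed.


Definition linop (f : V -> V) := forall a x y, f (a *: x + y) = a *: f x + f y.

Lemma lin0 f : linop f -> f 0 = 0.
Proof.
move=> L; have h := L 1 0 0; rewrite !scale1r addr0 in h.
by apply: (addrI (f 0)); rewrite -h addr0.
Qed.
Lemma linD f : linop f -> forall x y, f (x + y) = f x + f y.
Proof. by move=> L x y; rewrite -[x]scale1r L !scale1r. Qed.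
Lemma linZ f : linop f -> forall a x, f (a *: x) = a *: f x.
Proof. by move=> L a x; rewrite -[a *: x]addr0 L lin0 // addr0. Qed.
Lemma linB f : linop f -> forall x y, f (x - y) = f x - f y.
Proof. by move=> L x y; rewrite linD // -scaleN1r linZ // scaleN1r. Qed.

Lemma bnd_nonneg (f : V -> V) :
  (exists M, forall x, hnorm ip (f x) <= M * hnorm ip x) ->
  exists M, 0 <= M /\ forall x, hnorm ip (f x) <= M * hnorm ip x.
Proof.
case=> M hM; exists (Num.max M 0); split; first by rewrite le_max lexx orbT.
move=> x; apply: (le_trans (hM x)); apply: ler_wpM2r; first exact: hnorm_ge0.
by rewrite le_max lexx.
Qed.

Lemma opnorm_contr f : bounded_op ip f -> opnorm ip f <= 1 ->
  forall v, hnorm ip (f v) <= hnorm ip v.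
Proof.
case=> L /bnd_nonneg [M [M0 hM]] hop.
have H1 : forall v, hnorm ip v <= 1 -> hnorm ip (f v) <= 1.
  move=> v hv; apply: le_trans hop; apply: sup_upper_bound; last by exists v.
  split; first by exists (hnorm ip (f 0)), 0; rewrite hnorm0 ler01.
  exists M => r [x [hx ->]]; apply: (le_trans (hM x)).
  by rewrite -[leRHS]mulr1; exact: ler_wpM2l.
move=> v; have [v0|vn0] := eqVneq (hnorm ip v) 0.
  by rewrite (hnorm_eq0 _ v0) (lin0 _ L) // hnorm0.
have hpos : 0 < hnorm ip v by rewrite lt_def vn0 hnorm_ge0.
pose r := (hnorm ip v)^-1.
have r0 : 0 <= r by rewrite invr_ge0 hnorm_ge0.
have := H1 ((r%:C)%C *: v); rewrite linZ // !hnormZ // mulVf // lexx => /(_ isT) h.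
have -> : hnorm ip (f v) = hnorm ip v * (r * hnorm ip (f v)).
  by rewrite mulrA mulfV // mul1r.
by rewrite -[leRHS]mulr1; apply: ler_wpM2l => //; exact: hnorm_ge0.
Qed.

Lemma ortho x y : (forall t, hnorm ip x <= hnorm ip (x + t *: y)) -> ip x y = 0.
Proof.
move=> H.
set k := ip x y.
pose q := complex.Re (ip y y).
have q0 : 0 <= q := Re_ge0 (ip_ge0 y).
pose s := (q + 1)^-1.
have q1 : 0 < q + 1 by lra.
have s0 : 0 < s by rewrite invr_gt0.
have sq : s * q <= 1 by rewrite mulrC ler_pdivrMr // mul1r; lra.
pose m := k * k^*.
have m0 : 0 <= m := mul_conjC_ge0 k.
pose mr := complex.Re m.
have := H (- ((s%:C)%C * k)); rewrite hnorm_le.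
have E : ip (x + (- ((s%:C)%C * k)) *: y) (x + (- ((s%:C)%C * k)) *: y) =
   ip x x + ((s * (s * q - 2) * mr)%:C)%C.
  rewrite ipDl !ipDr !ipZl !ipZr (ipC x y) -/k -(ReK (ip_ge0 y)) -/q.
  rewrite rmorphN rmorphM /= conj_realC.
  have -> : ((s * (s * q - 2) * mr)%:C)%C = ((s%:C)%C * ((s%:C)%C * (q%:C)%C - 2%:R)) * m.
    by rewrite -[in RHS](ReK m0) -/mr !(rmorphM, rmorphB) /= rmorph_nat.
  rewrite /m; ring.
rewrite E lerDl ler0c => hX.
have a0 : s * (s * q - 2) < 0 by rewrite pmulr_rlt0 //; lra.
have mr0 : mr <= 0 by nra.
have mr00 : mr = 0 by apply/eqP; rewrite eq_le mr0 Re_ge0.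
have : m = 0 by rewrite -(ReK m0) -/mr mr00.
by move/eqP; rewrite mulf_eq0 conjC_eq0 orbb => /eqP.
Qed.


Lemma bounded_of (f : V -> V) (K : R[i]) : linop f -> 0 <= K ->
  (forall x, ip (f x) (f x) <= ip x x * K) -> bounded_op ip f.
Proof.
move=> L K0 hK; split => //; exists (Num.sqrt (complex.Re K)) => x.
rewrite /hnorm mulrC -sqrtrM; last exact: Re_ge0 (ip_ge0 x).
rewrite ler_sqrt; last by apply: mulr_ge0; apply: Re_ge0 => //; exact: ip_ge0.
apply: (le_trans (Re_le _ _ (hK x))).
rewrite -[in X in complex.Re X](ReK (ip_ge0 x)) -[in X in complex.Re X](ReK K0).
by rewrite /= mulr0 subr0.
Qed.

Lemma comp_bounded f g : bounded_op ip f -> bounded_op ip g ->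
  bounded_op ip (fun x => f (g x)).
Proof.
case=> Lf /bnd_nonneg [Mf [Mf0 hf]] [Lg /bnd_nonneg [Mg [Mg0 hg]]].
split; first by move=> c x y; rewrite Lg Lf.
exists (Mf * Mg) => x; apply: (le_trans (hf _)); rewrite -mulrA.
exact: ler_wpM2l.
Qed.

Lemma id_bounded : bounded_op ip id.
Proof.
by apply: (@bounded_of _ 1) => //; last by move=> x; rewrite mulr1.
Qed.

Definition Qop (a b : V) (x : V) : V := (ip x a / ip a a) *: b.

Lemma Qop_lin a b : linop (Qop a b).
Proof. by move=> c x y; rewrite /Qop ipDZl mulrDl scalerDl scalerA mulrA. Qed.

Lemma Qop_comp a b b' x : ip a a != 0 -> ip b' a = ip a a ->
  Qop a b (Qop a b' x) = Qop a b x.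
Proof. by move=> n0 h; rewrite /Qop ipZl h divfK. Qed.

Lemma Qop_fix a b z t : ip a a != 0 -> ip b a = ip a a -> ip z a = 0 ->
  Qop a b (b + t *: z) = b.
Proof. by move=> n0 h hz; rewrite /Qop ipDl ipZl hz mulr0 addr0 h divff // scale1r. Qed.

Lemma pyth a d c : ip d a = 0 ->
  ip (c *: a + d) (c *: a + d) = ip (c *: a) (c *: a) + ip d d.
Proof.
move=> h; rewrite ipDl !ipDr (ipZr c a d) h mulr0 add0r (ipZl c a d) (ipC d a) h rmorph0 mulr0.
by rewrite addr0.
Qed.

Lemma Qop_le a x : ip a a != 0 -> ip (Qop a a x) (Qop a a x) <= ip x x.
Proof.
move=> n0; set c := ip x a / ip a a.
have hd : ip (x - c *: a) a = 0 by rewrite ipBl ipZl /c divfK // subrr.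
have ex : x = c *: a + (x - c *: a) by rewrite addrC subrK.
by rewrite [in leRHS]ex pyth // lerDl ip_ge0.
Qed.

Lemma Qop_bounded a b : ip a a != 0 -> ip b a = ip a a -> bounded_op ip (Qop a b).
Proof.
move=> n0 hb; apply: (@bounded_of _ (ip b b / ip a a)).
- exact: Qop_lin.
- by apply: divr_ge0; exact: ip_ge0.
move=> x; have := Qop_le a x n0; rewrite /Qop !ipZl !ipZr.
set c := ip x a / ip a a => hc.
have -> : c * (c^* * ip b b) = c * (c^* * ip a a) * (ip b b / ip a a).
  by field.
by apply: ler_wpM2r => //; apply: divr_ge0; exact: ip_ge0.
Qed.

End Aux.

Theorem proposition4p6 (R : realType) (V : lmodType R[i]) (ip : V -> V -> R[i]) :
  is_hilbert ip -> dim_ge2 V ->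
  exists (G : choiceType) (op : G -> G -> G) (e : G),
    [/\ unital_semigroup op e,
        infinite_set [set: G],
        ~ left_cancellative op &
    exists (S T : G -> V -> V) (A B : V -> V),
      [/\ representation ip op e S /\ contractive ip S,
          representation ip op e T, bounded_op ip A /\ bounded_op ip B,
          (\esum_(g in [set: G])
             ((opnorm ip (fun x => T g x - A (S g (B x)))) ^+ 2)%:E < +oo)%E &
          ~ similar_to_contractive ip T]].
Proof.
move=> Hh [u [v Hind]].
have a0 : u != 0.
  apply/eqP => u0; have := Hind 1 0; rewrite u0 scaler0 scale0r addr0.
  by case=> // /eqP; rewrite oner_eq0.
pose n := ip u u.
have n0 : n != 0 by apply: contra a0 => /eqP /(ip_eq0 Hh) ->.
pose w := v - (ip v u / n) *: u.
have wa : ip w u = 0 by rewrite /w (ipBl Hh) (ipZl Hh) divfK // subrr.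
have w0 : w != 0.
  apply/eqP => /eqP; rewrite subr_eq0 => /eqP e.
  have := Hind (- (ip v u / n)) 1; rewrite scale1r scaleNr -e addNr.
  by case=> // _ /eqP; rewrite oner_eq0.
pose b := u + w.
have ba : ip b u = n by rewrite /b (ipDl Hh) wa addr0.
pose T (g : nat) : V -> V :=
  if g == 0%N then id else Qop (ip:=ip) u (if g == 1%N then b else u).
have Tb : forall g, g != 0%N -> ip (if g == 1%N then b else u) u = n.
  by move=> g _; case: ifP.
exists nat, (fun x y => if x == 0%N then y else x), 0%N.
split.
- split => [x y z|x|x] /=.
  + by case: x.
  + by [].
  + by case: x.
- exact: infinite_nat.
- by move=> Hc; have := Hc 1%N 1%N 2%N erefl.
exists (fun _ => id), T, (Qop (ip:=ip) u u), id.
split.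
- split; last first.
    move=> g; apply: ge_sup; first by exists 0, 0; rewrite hnorm0.
    by move=> r [x [hx ->]].
  by split => //; move=> g; exact: id_bounded.
- split => //.
  + move=> g; rewrite /T; case: ifP => _; first exact: id_bounded.
    by apply: Qop_bounded => //; case: ifP.
  + move=> g h x; case: g => [|g] //=; case: h => [|h] //=.
    by rewrite /T /= Qop_comp //; apply: (Tb h.+1).
- by split; [exact: Qop_bounded | exact: id_bounded].
- have Fz : forall g, (1 < g)%N ->
      opnorm ip (fun x => T g x - Qop (ip:=ip) u u (id (id x))) = 0.
    case=> [|[|g]] // _.
    have -> : (fun x => T g.+2 x - Qop (ip:=ip) u u (id (id x))) = (fun _ => 0).
      by apply: funext => x; rewrite /T /= subrr.
    rewrite /opnorm.
    have -> : [set r | exists x, hnorm ip x <= 1 /\ r = hnorm ip (0 : V)] = [set 0].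
      apply/seteqP; split => r /=.
        by case=> x [_ ->]; rewrite (hnorm0 Hh).
      by move=> ->; exists 0; rewrite (hnorm0 Hh) ler01.
    exact: sup1.
  rewrite (esumID [set 0%N]); last by move=> i _; rewrite lee_fin sqr_ge0.
  rewrite setTI esum_set1 ?lee_fin ?sqr_ge0 //.
  rewrite (esumID [set 1%N]); last by move=> i _; rewrite lee_fin sqr_ge0.
  have -> : [set: nat] `&` ~` [set 0%N] `&` [set 1%N] = [set 1%N].
    apply/seteqP; split => r /=; first by case=> _ ->.
    by move=> ->; split.
  rewrite esum_set1 ?lee_fin ?sqr_ge0 // esum1; last first.
    move=> i [[_ /= i0] /= i1]; rewrite Fz ?expr0n //.
    by case: i i0 i1 => [|[|i]].
  by rewrite adde0 -EFinD ltry.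
- case=> R0 [Ri [[hR0 hRi RR Rr] hc]].
  have LRi : linop Ri := hRi.1.
  have LR0 : linop R0 := hR0.1.
  have key : forall g t, hnorm ip (Ri (if g.+1 == 1%N then b else u)) <=
      hnorm ip (Ri (if g.+1 == 1%N then b else u) + t *: Ri w).
    move=> g t.
    have hQ : forall z, hnorm ip (Ri (T g.+1 (R0 z))) <= hnorm ip z.
      apply: (opnorm_contr Hh); last exact: hc.
      apply: (comp_bounded Ri (fun v => T g.+1 (R0 v))) => //; apply: (comp_bounded (T g.+1) R0) => //.
      by apply: Qop_bounded => //; case: ifP.
    apply: le_trans (hQ _).
    rewrite -(linZ _ LRi) -(linD _ LRi) RR /T /= Qop_fix //.
    by case: ifP.
  have o1 := ortho Hh _ _ (key 0%N).
  have o2 := ortho Hh _ _ (key 1%N).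
  move: o1 o2 => /= o1 o2; move: o1; rewrite /b (linD _ LRi) (ipDl Hh) o2 add0r.
  move=> /(ip_eq0 Hh) hw; move/eqP: w0; apply.
  by rewrite -[w]RR hw (lin0 _ LR0).
Qed.
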